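(* Let $f\in\mathbb{R}^{d_1\times\cdots\times d_m}$ with $f\ne0$, $1<p_1,\ldots,p_m<\infty$, $i\in[m]$, $(\lambda,\mathbf x^* )\in C_i^*$, $(\mu,\mathbf y^* )\in C^*$ and let $\Phi_i:C_i^*\to C^*$ be the bijection described below. Then: (i) if $(\lambda,\mathbf x^* )\ge0$ and $f\ge0$, then $\Phi_i(\lambda,\mathbf x^* )\ge0$; (ii) if $(\lambda,\mathbf x^* )>0$ and $f\ge0$ is weakly irreducible, then $\Phi_i(\lambda,\mathbf x^* )>0$; (iii) if $(\mu,\mathbf y^* )\ge0$, then $\Phi_i^{-1}(\mu,\mathbf y^* )\ge0$; (iv) if $(\mu,\mathbf y^* )>0$, then $\Phi_i^{-1}(\mu,\mathbf y^* )>0$.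
   Context: $f$ is identified with the multilinear form $f(\mathbf x)=\sum f_{j_1,\ldots,j_m}x_{1,j_1}\cdots x_{m,j_m}$ on $\mathcal R^d=\prod_k\mathbb{R}^{d_k}$; $\nabla_kf(\mathbf x)$ is the vector of partials $\partial f/\partial x_{k,j_k}$ (independent of $\mathbf x_k$, hence defined for $\mathbf x\in\mathcal R^{d-d_i}=\prod_{k\ne i}\mathbb{R}^{d_k}$). Inequalities entrywise (including the scalar component). $p'=p/(p-1)$; $\psi_q(\mathbf y)_j=|y_j|^{q-1}\mathrm{sign}(y_j)$. $\mathcal S^d=\{\mathbf x\in\mathcal R^d:\|\mathbf x_k\|_{p_k}=1\ \forall k\}$, $\mathcal S^{d-d_i}$ analogously for $k\ne i$. $Q(\mathbf x)=|f(\mathbf x)|/\prod_k\|\mathbf x_k\|_{p_k}$, $Q_i(\mathbf x)=\|\nabla_if(\mathbf x)\|_{p_i'}/\prod_{k\ne i}\|\mathbf x_k\|_{p_k}$. $C^*$ is the set of pairs $(\lambda,\mathbf x)$ with $\mathbf x\in\mathcal S^d$ a critical point of $Q$ (with $f(\mathbf x)\ne0$) and $\lambda=Q(\mathbf x)$; $C_i^*$ is the set of pairs $(\lambda,\mathbf x)$ with $\mathbf x\in\mathcal S^{d-d_i}$ a critical point of $Q_i$ (with $\nabla_if(\mathbf x)\ne0$) and $\lambda=Q_i(\mathbf x)$. $\Phi_i(\lambda,\mathbf x)=\big(\lambda,(\mathbf x_1,\ldots,\mathbf x_{i-1},\psi_{p_i'}(\varsigma_i(\mathbf x)\lambda^{-1}\nabla_if(\mathbf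 x)),\mathbf x_{i+1},\ldots,\mathbf x_m)\big)$ with $\varsigma_i(\mathbf x)=\mathrm{sign}\big(f(\mathbf x_1,\ldots,\mathbf x_{i-1},\psi_{p_i'}(\lambda^{-1}\nabla_if(\mathbf x)),\mathbf x_{i+1},\ldots,\mathbf x_m)\big)$; it is a bijection $C_i^*\to C^*$, whose inverse removes the $i$-th block. Weak irreducibility: the undirected graph on $\bigcup_k\{k\}\times[d_k]$ with $(k,j_k)\sim(l,j_l)$, $k\ne l$, iff $f_{j_1,\ldots,j_m}>0$ for some choice of remaining indices, is connected. *)

(* Defs.v *)
From HB Require Import structures.
From mathcomp Require Import all_boot all_order all_algebra.
From mathcomp Require Import all_classical all_reals all_analysis.
Set Implicit Arguments. Unset Strict Implicit. Unset Printing Implicit Defensive.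
Import Order.TTheory GRing.Theory Num.Theory.
Import numFieldNormedType.Exports.
Local Open Scope ring_scope.

Section Tensor.
Variables (R : realType) (m : nat) (d : 'I_m -> nat).

Definition MI := {dffun forall k : 'I_m, 'I_(d k)}.
Definition pt := forall k : 'I_m, 'I_(d k) -> R.

Definition mlf (f : MI -> R) (x : pt) : R :=
  \sum_(J : MI) f J * \prod_(k < m) x k (J k).

(* nabla_i f(x) : vector of partials d f / d x_{i,j}; independent of x_i *)
Definition nabla (f : MI -> R) (i : 'I_m) (x : pt) : 'I_(d i) -> R :=
  fun j => \sum_(J : MI | J i == j) f J * \prod_(k < m | k != i) x k (J k).

Definition ptadd (x v : pt) (t : R) : pt := fun k j => x k j + t * v k j.

(* R^{d-d_i} is encoded as the points of R^d whose i-th block is 0 *)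
Definition reduced (i : 'I_m) (x : pt) : Prop := forall j, x i j = 0.

End Tensor.
Arguments reduced {R m d} i x.
Arguments nabla {R m d} f i x.
Arguments ptadd {R m d} x v t.

Definition pnorm (R : realType) n (p : R) (v : 'I_n -> R) : R :=
  (\sum_(j < n) `|v j| `^ p) `^ p^-1.

Definition conjexp (R : realType) (p : R) : R := p / (p - 1).

Definition psi (R : realType) n (q : R) (y : 'I_n -> R) : 'I_n -> R :=
  fun j => `|y j| `^ (q - 1) * Num.sg (y j).

Section Ratios.
Variables (R : realType) (m : nat) (d : 'I_m -> nat) (f : MI d -> R) (p : 'I_m -> R).

Definition Q (x : pt R d) : R :=
  `|mlf f x| / \prod_(k < m) pnorm (p k) (x k).

Definition Qi (i : 'I_m) (x : pt R d) : R :=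
  pnorm (conjexp (p i)) (nabla f i x) / \prod_(k < m | k != i) pnorm (p k) (x k).

Definition critical (F : pt R d -> R) (D : pt R d -> Prop) (x : pt R d) : Prop :=
  forall v, D v -> is_derive (0 : R) (1 : R) (fun t : R => F (ptadd x v t)) 0.

Definition on_sphere (x : pt R d) : Prop :=
  forall k, pnorm (p k) (x k) = 1.

Definition on_sphere_i (i : 'I_m) (x : pt R d) : Prop :=
  (forall k, k != i -> pnorm (p k) (x k) = 1) /\ reduced i x.

Definition inC (lam : R) (x : pt R d) : Prop :=
  [/\ on_sphere x, mlf f x != 0, critical Q (fun _ => True) x & lam = Q x].

Definition inCi (i : 'I_m) (lam : R) (x : pt R d) : Prop :=
  [/\ on_sphere_i i x, (exists j, nabla f i x j != 0),
      critical (Qi i) (reduced i) x & lam = Qi i x].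

Definition Phi (i : 'I_m) (lam : R) (x : pt R d) : R * pt R d :=
  let s := Num.sg (mlf f (@dfwith _ (fun k : 'I_m => 'I_(d k) -> R) x i (psi (conjexp (p i)) (fun j => lam^-1 * nabla f i x j)))) in
  (lam, @dfwith _ (fun k : 'I_m => 'I_(d k) -> R) x i (psi (conjexp (p i)) (fun j => s * lam^-1 * nabla f i x j))).

End Ratios.
Arguments Qi {R m d} f p i x.
Arguments on_sphere_i {R m d} p i x.
Arguments inCi {R m d} f p i lam x.
Arguments Phi {R m d} f p i lam x.


Definition Phi_inv (R : realType) m (d : 'I_m -> nat) (i : 'I_m) (mu : R) (y : pt R d)
  : R * pt R d := (mu, @dfwith _ (fun k : 'I_m => 'I_(d k) -> R) y i (fun _ : 'I_(d i) => 0)).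

Definition nonneg (R : realType) m (d : 'I_m -> nat) (z : R * pt R d) : Prop :=
  0 <= z.1 /\ forall k j, 0 <= z.2 k j.
Definition pos (R : realType) m (d : 'I_m -> nat) (z : R * pt R d) : Prop :=
  0 < z.1 /\ forall k j, 0 < z.2 k j.
Definition nonneg_i (R : realType) m (d : 'I_m -> nat) (i : 'I_m) (z : R * pt R d) : Prop :=
  0 <= z.1 /\ forall k, k != i -> forall j, 0 <= z.2 k j.
Definition pos_i (R : realType) m (d : 'I_m -> nat) (i : 'I_m) (z : R * pt R d) : Prop :=
  0 < z.1 /\ forall k, k != i -> forall j, 0 < z.2 k j.

Definition vtx m (d : 'I_m -> nat) := {k : 'I_m & 'I_(d k)}.
Definition wedge (R : realType) m (d : 'I_m -> nat) (f : MI d -> R) : rel (vtx d) :=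
  fun u v => (tag u != tag v) &&
    [exists J : MI d, [&& J (tag u) == tagged u, J (tag v) == tagged v & 0 < f J]].
Definition weakly_irreducible (R : realType) m (d : 'I_m -> nat) (f : MI d -> R) : Prop :=
  forall u v : vtx d, connect (wedge f) u v.

Arguments Phi_inv {R m d} i mu y.
Arguments nonneg_i {R m d} i z.
Arguments pos_i {R m d} i z.

(* Main.v *)
Require Import Defs.
From HB Require Import structures.
From mathcomp Require Import all_boot all_order all_algebra.
From mathcomp Require Import all_classical all_reals all_analysis.
Import Order.TTheory GRing.Theory Num.Theory.
Local Open Scope ring_scope.

Lemma psi_ge0 (R : realType) n (q : R) (y : 'I_n -> R) :
  (forall j, 0 <= y j) -> forall j, 0 <= psi q y j.
Proof. by move=> H j; rewrite /psi mulr_ge0 ?powR_ge0 // sgr_ge0. Qed.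

Lemma psi_gt0 (R : realType) n (q : R) (y : 'I_n -> R) :
  (forall j, 0 < y j) -> forall j, 0 < psi q y j.
Proof.
move=> H j; rewrite /psi gtr0_sg // mulr1 powR_gt0 //.
by rewrite normr_gt0 gt_eqF.
Qed.

Lemma mlf_ge0 (R : realType) m (d : 'I_m -> nat) (f : MI d -> R) (x : pt R d) :
  (forall J, 0 <= f J) -> (forall k j, 0 <= x k j) -> 0 <= mlf f x.
Proof.
move=> Hf Hx; rewrite /mlf sumr_ge0 // => J _.
by rewrite mulr_ge0 // prodr_ge0.
Qed.

Lemma nabla_ge0 (R : realType) m (d : 'I_m -> nat) (f : MI d -> R) i (x : pt R d) :
  (forall J, 0 <= f J) -> (forall k, k != i -> forall j, 0 <= x k j) ->
  forall j, 0 <= nabla f i x j.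
Proof.
move=> Hf Hx j; rewrite /nabla sumr_ge0 // => J _.
by rewrite mulr_ge0 // prodr_ge0 // => k /Hx.
Qed.

Lemma nabla_gt0 (R : realType) m (d : 'I_m -> nat) (f : MI d -> R) (i : 'I_m) (x : pt R d) (j : 'I_(d i)) (J : MI d) :
  (forall J, 0 <= f J) -> J i = j -> 0 < f J -> (forall k, k != i -> forall j, 0 < x k j) ->
  0 < nabla f i x j.
Proof.
move=> Hf HJi HJf Hx.
rewrite /nabla (bigD1 J) /=; last by rewrite HJi.
rewrite ltr_wpDr //; first by rewrite sumr_ge0 // => J' _;
  rewrite mulr_ge0 // prodr_ge0 // => k Hk; apply: ltW; apply: Hx.
by rewrite mulr_gt0 // prodr_gt0 // => k Hk; apply: Hx.
Qed.

Lemma mlf_gt0 (R : realType) m (d : 'I_m -> nat) (f : MI d -> R) (x : pt R d) (J0 : MI d) :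
  (forall J, 0 <= f J) -> 0 < f J0 -> (forall k j, 0 < x k j) -> 0 < mlf f x.
Proof.
move=> Hf Hf0 Hx.
rewrite /mlf (bigD1 J0) // ltr_wpDr //; last by rewrite mulr_gt0 // prodr_gt0.
by rewrite sumr_ge0 // => J _; rewrite mulr_ge0 // prodr_ge0 // => k _; apply/ltW.
Qed.

Lemma Phi2 (R : realType) m (d : 'I_m -> nat) (f : MI d -> R) (p : 'I_m -> R) i lam (x : pt R d) :
  (Phi f p i lam x).2 = @dfwith _ (fun k : 'I_m => 'I_(d k) -> R) x i
    (psi (conjexp (p i)) (fun j => Num.sg (mlf f (@dfwith _ (fun k : 'I_m => 'I_(d k) -> R) x i
       (psi (conjexp (p i)) (fun j => lam^-1 * nabla f i x j)))) * lam^-1 * nabla f i x j)).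
Proof. by []. Qed.

Lemma dfo (R : realType) m (d : 'I_m -> nat) (x : pt R d) i z k :
  i != k -> @dfwith _ (fun k : 'I_m => 'I_(d k) -> R) x i z k = x k.
Proof. exact: dfwith_out. Qed.
Lemma dfi (R : realType) m (d : 'I_m -> nat) (x : pt R d) i z :
  @dfwith _ (fun k : 'I_m => 'I_(d k) -> R) x i z i = z.
Proof. exact: dfwith_in. Qed.

Theorem corollary2 (R : realType) (m : nat) (d : 'I_m -> nat) (f : MI d -> R)
    (p : 'I_m -> R) (i : 'I_m) (lam : R) (x : pt R d) (mu : R) (y : pt R d) :
  (exists J, f J != 0) ->
  (forall k, 1 < p k) ->
  inCi f p i lam x ->
  inC f p mu y ->
  [/\ (nonneg_i i (lam, x) -> (forall J, 0 <= f J) -> nonneg (Phi f p i lam x)),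
      (pos_i i (lam, x) -> (forall J, 0 <= f J) -> weakly_irreducible f ->
         pos (Phi f p i lam x)),
      (nonneg (mu, y) -> nonneg_i i (Phi_inv i mu y))
    & (pos (mu, y) -> pos_i i (Phi_inv i mu y))].
Proof.
move=> [J0 HJ0] _ _ _; split.
- move=> [/= Hl Hx] Hf; split => //= k.
  have Hn := @nabla_ge0 _ _ _ f i x Hf Hx.
  have Hz : forall j, 0 <= lam^-1 * nabla f i x j by move=> j'; rewrite mulr_ge0 ?invr_ge0.
  case: (eqVneq i k) => [<-|Hk] j; last by rewrite dfo //; apply: Hx; rewrite eq_sym.
  rewrite dfi.
  apply: psi_ge0 => j'; rewrite -mulrA mulr_ge0 // sgr_ge0 mlf_ge0 // => k''.
  case: (eqVneq i k'') => [<-|Hk3] j''; first by rewrite dfi; exact: psi_ge0.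
  by rewrite dfo //; apply: Hx; rewrite eq_sym.
- move=> [/= Hl Hx] Hf Hw.
  have Hf0 : 0 < f J0 by rewrite lt_def HJ0 Hf.
  have Hn : forall j, 0 < nabla f i x j.
    move=> j.
    have [J [HJi HJf]] : exists J : MI d, J i = j /\ 0 < f J.
      case: (eqVneq (J0 i) j) => [<-|Hne]; first by exists J0.
      have := Hw (existT _ i j) (existT _ i (J0 i)).
      case/connectP => [[|w s]] /=.
        by move=> _ [] /eqP; rewrite eq_Tagged /= (negbTE Hne).
      case/andP => /andP [_ /existsP [J /and3P [/eqP H1 _ H3]]] _ _.
      by exists J.
    exact: (@nabla_gt0 _ _ _ _ _ _ _ J Hf HJi HJf Hx).
  have Hz : forall j, 0 < lam^-1 * nabla f i x j by move=> j'; rewrite mulr_gt0 ?invr_gt0.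
  have Hpt : forall k j, 0 < @dfwith _ (fun k : 'I_m => 'I_(d k) -> R) x i
       (psi (conjexp (p i)) (fun j => lam^-1 * nabla f i x j)) k j.
    move=> k; case: (eqVneq i k) => [<-|Hk] j; first by rewrite dfi; exact: psi_gt0.
    by rewrite dfo //; apply: Hx; rewrite eq_sym.
  have Hs : 0 < mlf f (@dfwith _ (fun k : 'I_m => 'I_(d k) -> R) x i
       (psi (conjexp (p i)) (fun j => lam^-1 * nabla f i x j))).
    exact: (@mlf_gt0 _ _ _ _ _ J0 Hf Hf0 Hpt).
  split; first by [].
  move=> k; rewrite Phi2.
  case: (eqVneq i k) => [<-|Hk] j; last by rewrite dfo //; apply: Hx; rewrite eq_sym.
  rewrite dfi.
  by apply: psi_gt0 => j'; rewrite gtr0_sg // mul1r.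
- move=> [/= Hm Hy]; split => //= k Hk j.
  by rewrite dfo 1?eq_sym.
- move=> [/= Hm Hy]; split => //= k Hk j.
  by rewrite dfo 1?eq_sym.
Qed.
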